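(* Let $\mathcal{G}$ be a connected undirected weighted graph (nonzero real weights, possibly negative) such that $L(\mathcal{G})$ has exactly one zero eigenvalue. Let $\mathcal{T}$ be a spanning tree with cycle subgraph $\mathcal{C}$. Then $R_{(\mathcal{T},\mathcal{C})}WR_{(\mathcal{T},\mathcal{C})}^T$ and $L_{ess}(\mathcal{T})$ are invertible and the Moore–Penrose pseudo-inverse of $L(\mathcal{G})$ is $$L^{\dagger}(\mathcal{G})=(E_{\mathcal{T}}^L)^T\big(R_{(\mathcal{T},\mathcal{C})}WR_{(\mathcal{T},\mathcal{C})}^T\big)^{-1}E_{\mathcal{T}}^L=(E_{\mathcal{T}}^L)^T L_{ess}(\mathcal{T})^{-1}E_{\mathcal{T}}^T,$$ where $E_{\mathcal{T}}^L=L_e(\mathcal{T})^{-1}E_{\mathcal{T}}^T$.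
   Context: A weighted graph $\mathcal{G}=(\mathcal{V},\mathcal{E},\mathcal{W})$ has weights $\mathcal{W}:\mathcal{E}\to\mathbb{R}\setminus\{0\}$ collected in the diagonal matrix $W$. With an arbitrary edge orientation, the incidence matrix $E$ has in the column of edge $(i,j)$ entry $+1$ in row $i$, $-1$ in row $j$, $0$ elsewhere; $L(\mathcal{G})=EWE^T$. For a spanning tree $\mathcal{T}$, $\mathcal{C}$ is the subgraph of the remaining edges, edges ordered so $E=[E_{\mathcal{T}}\ E_{\mathcal{C}}]$ and $W$ correspondingly. $L_e(\mathcal{T})=E_{\mathcal{T}}^TE_{\mathcal{T}}$ (invertible), $E_{\mathcal{T}}^L=L_e(\mathcal{T})^{-1}E_{\mathcal{T}}^T$ is a left inverse of $E_{\mathcal{T}}$, $R_{(\mathcal{T},\mathcal{C})}=[\,I\ \ L_e(\mathcal{T})^{-1}E_{\mathcal{T}}^TE_{\mathcal{C}}\,]$, and $L_{ess}(\mathcal{T})=L_e(\mathcal{T})R_{(\mathcal{T},\mathcal{C})}WR_{(\mathcal{T},\mathcal{C})}^T$. *)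

(* Defs.v *)
From HB Require Import structures.
From mathcomp Require Import all_boot all_order all_algebra.
Set Implicit Arguments. Unset Strict Implicit. Unset Printing Implicit Defensive.
Import Order.TTheory GRing.Theory Num.Theory.
Local Open Scope ring_scope.

(* A weighted graph on the vertex set 'I_n with m edges is given by an edge
   map ed : 'I_m -> 'I_n * 'I_n (edge j oriented from (ed j).1 to (ed j).2)
   and a weight map w : 'I_m -> R. *)

Definition simple_edges (n m : nat) (ed : 'I_m -> 'I_n * 'I_n) : Prop :=
  (forall j, (ed j).1 != (ed j).2) /\
  (forall j j', j != j' -> ed j <> ed j' /\ ed j <> ((ed j').2, (ed j').1)).

Definition adj_rel (n m : nat) (ed : 'I_m -> 'I_n * 'I_n) : rel 'I_n :=
  fun u v => [exists j, ((ed j).1 == u) && ((ed j).2 == v)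
                     || ((ed j).1 == v) && ((ed j).2 == u)].

Definition connected_edges (n m : nat) (ed : 'I_m -> 'I_n * 'I_n) : Prop :=
  forall u v : 'I_n, connect (adj_rel ed) u v.

Definition incidence (R : pzRingType) (n m : nat) (ed : 'I_m -> 'I_n * 'I_n)
  : 'M[R]_(n, m) :=
  \matrix_(i, j) (((i == (ed j).1)%:R) - ((i == (ed j).2)%:R)).

Definition weight_mx (R : pzRingType) (m : nat) (w : 'I_m -> R) : 'M[R]_m :=
  diag_mx (\row_j w j).

Definition is_MP_inverse (R : pzRingType) (n m : nat)
  (A : 'M[R]_(n, m)) (X : 'M[R]_(m, n)) : Prop :=
  [/\ A *m X *m A = A, X *m A *m X = X,
      (A *m X)^T = A *m X & (X *m A)^T = X *m A].

(* Main.v *)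
Require Import Defs.
From HB Require Import structures.
From mathcomp Require Import all_boot all_order all_algebra.
Import Order.TTheory GRing.Theory Num.Theory.
Local Open Scope ring_scope.

Section H.
Variable R : realFieldType.

Lemma sq0 a b (A : 'M[R]_(a, b)) : A *m A^T = 0 -> A = 0.
Proof.
move=> H; apply/matrixP => i j; rewrite mxE.
have := congr1 (fun M : 'M_a => M i i) H; rewrite !mxE => H2.
have Hn : forall l : 'I_b, true -> 0 <= A i l * A^T l i.
  by move=> l _; rewrite mxE -expr2 sqr_ge0.
have := @psumr_eq0P _ _ _ _ Hn H2 j isT.
by rewrite mxE => /eqP; rewrite mulf_eq0 orbb => /eqP.
Qed.

Lemma sum_ind n (F : 'I_n -> R) a : \sum_i F i * (i == a)%:R = F a.
Proof.
rewrite (eq_bigr (fun i => if i == a then F i else 0)).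
  by rewrite -big_mkcond big_pred1_eq.
by move=> i _; case: eqP; rewrite ?mulr1 ?mulr0.
Qed.

Lemma inc_entry n q (ed : 'I_q -> 'I_n * 'I_n) (x : 'rV[R]_n) j :
  (x *m incidence R ed) 0 j = x 0 (ed j).1 - x 0 (ed j).2.
Proof.
rewrite mxE (eq_bigr (fun i => x 0 i * (i == (ed j).1)%:R - x 0 i * (i == (ed j).2)%:R)).
  by rewrite sumrB !sum_ind.
by move=> i _; rewrite mxE mulrBr.
Qed.

Lemma inc_const n q (ed : 'I_q -> 'I_n * 'I_n) (c : R) :
  (c *: const_mx 1 : 'rV[R]_n) *m incidence R ed = 0.
Proof.
by apply/matrixP => i j; rewrite ord1 inc_entry !mxE subrr.
Qed.

Lemma const_ker n q (ed : 'I_q -> 'I_n.+1 * 'I_n.+1) (x : 'rV[R]_n.+1) :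
  connected_edges ed -> x *m incidence R ed = 0 -> x = x 0 0 *: const_mx 1.
Proof.
move=> Hc Hx.
have He : forall u v, adj_rel ed u v -> x 0 u = x 0 v.
  move=> u v /existsP [j /orP [] /andP [/eqP e1 /eqP e2]];
  have := congr1 (fun M : 'rV_q => M 0 j) Hx; rewrite inc_entry mxE e1 e2;
  move/eqP; rewrite subr_eq0 => /eqP //.
have Hconn : forall u v, connect (adj_rel ed) u v -> x 0 u = x 0 v.
  move=> u v /connectP [s]; elim: s u => [|a s IH] u /=; first by move=> _ ->.
  by move=> /andP [ea ps] lv; rewrite (He _ _ ea) (IH a ps lv).
apply/matrixP => i j; rewrite ord1 !mxE mulr1; exact: Hconn.
Qed.

Lemma cp_conj n (S A : 'M[R]_n) : S \in unitmx ->
  char_poly (invmx S *m A *m S) = char_poly A.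
Proof.
move=> SU; rewrite /char_poly.
have e1 : map_mx (@polyC R) (invmx S) *m map_mx polyC S = 1%:M.
  by rewrite -map_mxM mulVmx // map_mx1.
have e2 : map_mx (@polyC R) S *m map_mx polyC (invmx S) = 1%:M.
  by rewrite -map_mxM mulmxV // map_mx1.
have -> : char_poly_mx (invmx S *m A *m S) =
  map_mx polyC (invmx S) *m char_poly_mx A *m map_mx polyC S.
  rewrite /char_poly_mx mulmxBr mulmxBl !map_mxM.
  rewrite -(mulmxA (map_mx polyC (invmx S))) scalar_mxC mulmxA.
  by rewrite -(mulmxA _ (map_mx polyC (invmx S))) e1 mulmx1.
by rewrite !det_mulmx mulrC mulrA -det_mulmx e2 det1 mul1r.
Qed.

End H.

Lemma mp_aux (R : realFieldType) n q (A : 'M[R]_(n, q)) (B : 'M[R]_(q, n)) (M Mi : 'M[R]_q) :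
  B *m A = 1%:M -> M *m Mi = 1%:M -> Mi *m M = 1%:M -> (A *m B)^T = A *m B ->
  is_MP_inverse (A *m M *m A^T) (B^T *m Mi *m B).
Proof.
move=> BA MMi MiM sym.
have AB : A^T *m B^T = 1%:M by rewrite -trmx_mul BA trmx1.
have e1 : A *m M *m A^T *m (B^T *m Mi *m B) = A *m B.
  by rewrite !mulmxA -(mulmxA _ A^T) AB mulmx1 -(mulmxA _ M) MMi mulmx1.
have e2 : B^T *m Mi *m B *m (A *m M *m A^T) = (A *m B)^T.
  by rewrite trmx_mul !mulmxA -(mulmxA _ B) BA mulmx1 -(mulmxA _ Mi) MiM mulmx1.
split.
- by rewrite e1 !mulmxA -(mulmxA _ B) BA mulmx1.
- by rewrite e2 trmx_mul !mulmxA -(mulmxA _ A^T) AB mulmx1.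
- by rewrite e1.
- by rewrite e2 trmxK sym.
Qed.

Theorem proposition2 (R : realFieldType) (p k : nat)
  (ed : 'I_(p + k) -> 'I_p.+1 * 'I_p.+1) (w : 'I_(p + k) -> R) :
  simple_edges ed ->
  (forall j, w j != 0) ->
  connected_edges ed ->
  let E : 'M[R]_(p.+1, p + k) := incidence R ed in
  let W : 'M[R]_(p + k) := weight_mx w in
  let L : 'M[R]_p.+1 := E *m W *m E^T in
  mup 0 (char_poly L) = 1%N ->
  (* T is a spanning tree: its p edges connect all p+1 vertices *)
  connected_edges (fun j : 'I_p => ed (lshift k j)) ->
  let ET : 'M[R]_(p.+1, p) := lsubmx E in
  let EC : 'M[R]_(p.+1, k) := rsubmx E in
  let Le : 'M[R]_p := ET^T *m ET in
  let ETL : 'M[R]_(p, p.+1) := invmx Le *m ET^T in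
  let Rm : 'M[R]_(p, p + k) := row_mx 1%:M (invmx Le *m ET^T *m EC) in
  let Less : 'M[R]_p := Le *m (Rm *m W *m Rm^T) in
  [/\ Rm *m W *m Rm^T \in unitmx,
      Less \in unitmx,
      is_MP_inverse L (ETL^T *m invmx (Rm *m W *m Rm^T) *m ETL)
    & ETL^T *m invmx (Rm *m W *m Rm^T) *m ETL = ETL^T *m invmx Less *m ET^T].
Proof.
move=> _ _ _ E W L Hmup HcT ET EC Le ETL Rm Less.
have ETE : ET = incidence R (fun j => ed (lshift k j)).
  by apply/matrixP => i j; rewrite !mxE.
have ECE : EC = incidence R (fun j => ed (rshift p j)).
  by apply/matrixP => i j; rewrite !mxE.
have kerT : forall x : 'rV_p.+1, x *m ET = 0 -> x = x 0 0 *: const_mx 1.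
  by move=> x; rewrite ETE; apply: const_ker.
have rkET : \rank ET = p.
  apply/eqP; rewrite eqn_leq rank_leq_col /=.
  have sK : (kermx ET <= (const_mx 1 : 'rV[R]_p.+1))%MS.
    apply/row_subP => i; have /sub_kermxP Hi := row_sub i (kermx ET).
    by rewrite (kerT _ Hi) scalemx_sub.
  have := mxrankS sK; rewrite mxrank_ker => H.
  have H1 := leq_trans H (rank_leq_row _).
  by move: H1; rewrite leq_subLR addn1 ltnS.
have rfT : row_free ET^T by rewrite /row_free mxrank_tr rkET.
have LeU : Le \in unitmx.
  rewrite -row_free_unit -kermx_eq0; apply/rowV0P => v /sub_kermxP Hv.
  have : (v *m ET^T) *m (v *m ET^T)^T = 0.
    by rewrite trmx_mul trmxK !mulmxA -(mulmxA _ ET^T ET) -/Le Hv mul0mx.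
  move/sq0 => H; apply: (row_free_inj rfT); by rewrite H mul0mx.
have LeT : Le^T = Le by rewrite /Le trmx_mul trmxK.
set X := invmx Le *m ET^T *m EC.
have ECeq : EC = ET *m X.
  set Y := EC - ET *m X.
  have HY1 : ET^T *m Y = 0.
    by rewrite /Y mulmxBr /X !mulmxA -/Le mulmxV // mul1mx subrr.
  have HY2 : Y^T *m EC = 0.
    apply/row_matrixP => j; rewrite row_mul row0.
    have r0 : row j Y^T *m ET = 0 by rewrite -row_mul -(trmxK ET) -trmx_mul HY1 trmx0 row0.
    by rewrite (kerT _ r0) ECE inc_const.
  have : Y^T *m Y = 0.
    by rewrite {2}/Y mulmxBr HY2 mulmxA -(trmxK ET) -trmx_mul HY1 trmx0 mul0mx subrr.
  rewrite -{2}(trmxK Y) => /sq0 /eqP; rewrite trmx_eq0 /Y subr_eq0 => /eqP //.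
have Edec : E = ET *m Rm by rewrite /Rm mul_mx_row mulmx1 -ECeq hsubmxK.
set M := Rm *m W *m Rm^T.
have LE : L = ET *m M *m ET^T by rewrite /L Edec trmx_mul !mulmxA.
have ETLET : ETL *m ET = 1%:M by rewrite /ETL -mulmxA -/Le mulVmx.
pose ones : 'cV[R]_p.+1 := const_mx 1.
pose S : 'M[R]_(p.+1, 1 + p) := row_mx ones ET.
have SU : S \in unitmx.
  rewrite -row_free_unit -kermx_eq0; apply/rowV0P => v /sub_kermxP Hv.
  have Hv' : v *m (row_mx ones ET : 'M_(p.+1, 1 + p)) = (0 : 'M_(1, 1 + p)) := Hv.
  move: Hv'; rewrite mul_mx_row -(row_mx0 _ 1 1 p) => /eq_row_mx [h1 h2].
  rewrite (kerT _ h2); rewrite (kerT _ h2) in h1.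
  have := congr1 (fun M : 'M_1 => M 0 0) h1; rewrite !mxE.
  under eq_bigr do rewrite !mxE mulr1 mulr1.
  rewrite sumr_const card_ord => /eqP; rewrite mulrn_eq0 /= => /eqP ->.
  by rewrite scale0r row_mx0.
pose D : 'M[R]_(1 + p) := block_mx (0 : 'M_1) 0 0 (M *m Le).
have LSD : L *m S = S *m D.
  rewrite /S /D mul_mx_row mul_row_block !mulmx0 !addr0 add0r.
  congr row_mx; last by rewrite LE -!mulmxA.
  rewrite LE -mulmxA /ones -(trmxK (const_mx 1)) -trmx_mul trmx_const.
  by rewrite -(scale1r (const_mx 1)) ETE inc_const trmx0 mulmx0.
have DE : D = invmx S *m L *m S by rewrite -mulmxA LSD mulmxA mulVmx // mul1mx.
have cpD : char_poly L = 'X * char_poly (M *m Le).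
  have cpDb : @char_poly R (1 + p) D = 'X * char_poly (M *m Le).
    rewrite /char_poly /D char_block_diag_mx det_ublock.
    by rewrite /char_poly_mx map_mx0 subr0 det_scalar1.
  rewrite -(@cp_conj R _ S L SU) -DE; exact: cpDb.
have mX : mup (0 : R) 'X = 1%N.
  by have := mup_XsubCX 1 (0 : R) 0; rewrite polyC0 subr0 expr1 eqxx.
move: Hmup; rewrite cpD mupM ?polyX_eq0 ?monic_neq0 ?char_poly_monic // mX.
move=> /eqP; rewrite -{2}(addn0 1%N) eqn_add2l => /eqP Hm.
have nr : ~~ root (char_poly (M *m Le)) 0.
  apply/negP; rewrite -dvdp_XsubCl XsubC_dvd ?monic_neq0 ?char_poly_monic //.
  by rewrite Hm.
have MLeU : M *m Le \in unitmx.
  move: nr; rewrite /root horner_coef0 char_poly_det mulf_eq0 signr_eq0 /=.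
  by rewrite unitmxE unitfE.
have MU : M \in unitmx by move: MLeU; rewrite unitmx_mul => /andP [].
have LU : Less \in unitmx by rewrite /Less unitmx_mul LeU MU.
have inv2 : invmx Less = invmx M *m invmx Le.
  have e : Less *m (invmx M *m invmx Le) = 1%:M.
    by rewrite /Less -mulmxA (mulmxA M) mulmxV // mul1mx mulmxV.
  by rewrite -[LHS]mulmx1 -e mulmxA mulVmx // mul1mx.
split => //.
- rewrite LE; apply: mp_aux => //; first exact: mulmxV; first exact: mulVmx.
  by rewrite /ETL !trmx_mul trmxK trmx_inv LeT mulmxA.
- by rewrite inv2 /ETL !mulmxA.
Qed.
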